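(* Let $1\le p\le\infty$ and $m\in\mathbb N_0$. Let $\varphi\in C_0^k(\mathbb R)$ with $\operatorname{supp}\varphi\subset[0,1]$, $\varphi>0$ on $(0,1)$ and $k>m+1$, and assume that $\varphi^{(k)}$ has only finitely many zeros in $[0,1]$. Then $$\frac{|\varphi^{(r)}(t)\,\varphi^{(\alpha)}(t)|}{|\varphi(t)|^{1/p}}\in L_\infty([0,1])$$ for all $r,\alpha\in\mathbb N_0$ with $r+\alpha\le m$.
   Context: $C_0^k(\mathbb R)$: compactly supported functions whose derivatives up to order $k$ are uniformly continuous. *)

(* Defs.v *)
From HB Require Import structures.
From mathcomp Require Import all_boot all_order all_algebra.
From mathcomp Require Import all_classical all_reals all_analysis.
Set Implicit Arguments. Unset Strict Implicit. Unset Printing Implicit Defensive.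
Import Order.TTheory GRing.Theory Num.Theory.
Import numFieldNormedType.Exports.
Local Open Scope classical_set_scope.
Local Open Scope ring_scope.

Definition supp (R : realType) (f : R -> R) : set R := closure [set x | f x != 0].

Definition C0k (R : realType) (k : nat) (f : R -> R) : Prop :=
  (forall n, (n < k)%N -> forall x : R, derivable (derive1n n f) x 1) /\
  (forall n, (n <= k)%N -> unif_continuous (derive1n n f)) /\
  compact (supp f).

Definition inv_exp (R : realType) (p : \bar R) : R :=
  match p with r%:E => r^-1 | _ => 0 end.

Definition Linfty01 (R : realType) (g : R -> R) : Prop :=
  measurable_fun (`[0%R, 1%R] : set R) g /\
  ('N[(@lebesgue_measure R)]_(+oo%E) [EFin \o (g \_ `[0%R, 1%R])] < +oo)%E.

(* Main.v *)
Require Import Defs.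
From HB Require Import structures.
From mathcomp Require Import all_boot all_order all_algebra.
From mathcomp Require Import all_classical all_reals all_analysis.
From mathcomp Require Import ess_sup_inf measurable_realfun.
From mathcomp Require Import ring lra zify.
Import Order.TTheory GRing.Theory Num.Theory.
Import numFieldNormedType.Exports.
Local Open Scope classical_set_scope.
Local Open Scope ring_scope.

Section Aux.
Variable R : realType.

Lemma Linfty01_bound (g : R -> R) (M : R) :
  measurable_fun (`[0%R, 1%R] : set R) g ->
  (forall t, 0 <= t <= 1 -> `|g t| <= M) -> Linfty01 g.
Proof.
move=> mg gM; split => //.
rewrite unlock /=; case: ifPn => _; last by [].
apply: (@le_lt_trans _ _ (Num.max M 0)%:E); last exact: ltry.
apply/ess_supP; apply: nearW => x /=.
rewrite patchE; case: ifPn => xD /=.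
  move: xD; rewrite inE /= in_itv /= => xD.
  by rewrite lee_fin; apply: le_trans (gM _ xD) _; rewrite le_max lexx.
by rewrite normr0 lee_fin le_max lexx orbT.
Qed.

Lemma uc_continuous (f : R -> R) : unif_continuous f -> continuous f.
Proof.
move=> /unif_continuousP uc x; apply/cvgrPdist_lt => e e0.
have [d d0 H] := uc e e0.
near=> y.
have hb : ball x d y.
  near: y; exists d => // z /=; by rewrite -ball_normE.
by have := H (x, y) hb; rewrite /= -ball_normE /ball_ /=.
Unshelve. all: by end_near. Qed.

Lemma measurable_inv : measurable_fun [set: R] (@GRing.inv R).
Proof.
have -> : [set: R] = [set 0] `|` ~` [set 0] by rewrite setUv.
apply/measurable_funU => //.
  by apply: measurableC.
split.
  have e0 : {in [set (0:R)], cst 0 =1 GRing.inv}.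
    by move=> x; rewrite inE => ->; rewrite invr0.
  exact: (eq_measurable_fun (cst (0:R)) e0 (measurable_cst _)).
apply: open_continuous_measurable_fun.
  apply: closed_openC; apply: accessible_closed_set1.
  by apply: hausdorff_accessible; exact: Rhausdorff.
move=> x; rewrite inE => /eqP x0; exact: inv_continuous.
Qed.
End Aux.

Section Alg.
Variable R : realType.
Variables (x : nat -> R) (K : nat).
Hypothesis xpos : forall j, (j <= K)%N -> 0 < x j.
Hypothesis xlc : forall i, (i + 3 <= K)%N -> x i.+1 ^+ 2 <= 2 * x i * x i.+2.

Lemma alg_ratio i d : (i + d + 2 <= K)%N ->
  x i.+1 * x (i + d)%N <= 2 ^+ d * x i * x (i + d).+1.
Proof.
elim: d => [|d IH] hK.
  by rewrite addn0 expr0 mul1r mulrC.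
have IH' := IH (ltac:(lia)).
have base := xlc (i + d) (ltac:(lia)).
rewrite addnS.
have pu := xpos (i + d) (ltac:(lia)).
have pv := xpos (i + d).+1 (ltac:(lia)).
have pw := xpos (i + d).+2 (ltac:(lia)).
have pA := xpos i.+1 (ltac:(lia)).
have pB := xpos i (ltac:(lia)).
have p2 : 0 < (2:R) ^+ d by apply: exprn_gt0.
have h := ler_pM (ltW (mulr_gt0 pA pu)) (ltW (exprn_gt0 2 pv)) IH' base.
rewrite -(ler_pM2r (mulr_gt0 pu pv)) exprS.
move: h; set A := x i.+1; set B := x i; set u := x (i + d)%N; set v := x (i + d).+1;
  set w := x (i + d).+2; set c := 2 ^+ d => h.
have -> : A * v * (u * v) = A * u * v ^+ 2 by ring.
apply: (le_trans h); rewrite le_eqVlt; apply/orP; left; apply/eqP; ring.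
Qed.

Lemma alg_main r a : (r + a + 2 <= K)%N ->
  x r * x a <= 2 ^+ (r * a) * x 0 * x (r + a)%N.
Proof.
elim: r => [|r IH] hK.
  by rewrite mul0n expr0 mul1r add0n.
have IH' := IH (ltac:(lia)).
have rat := alg_ratio r a (ltac:(lia)).
have pr := xpos r (ltac:(lia)).
have pra := xpos (r + a)%N (ltac:(lia)).
have pa := xpos a (ltac:(lia)).
have pr1 := xpos r.+1 (ltac:(lia)).
have p0 := xpos 0 (ltac:(lia)).
have h := ler_pM (ltW (mulr_gt0 pr pa)) (ltW (mulr_gt0 pr1 pra)) IH' rat.
rewrite -(ler_pM2r (mulr_gt0 pr pra)) mulSn exprD addSn.
move: h; set A := x r.+1; set B := x r; set u := x (r + a)%N; set v := x (r + a).+1;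
  set w := x a; set c := 2 ^+ (r * a); set c' := 2 ^+ a; set z := x 0 => h.
have -> : A * w * (B * u) = B * w * (A * u) by ring.
apply: (le_trans h); rewrite le_eqVlt; apply/orP; left; apply/eqP; ring.
Qed.
End Alg.

Section Core.
Variable R : realType.

Lemma cont_of_derive (g dg : R -> R) :
  (forall x : R, is_derive x 1 g (dg x)) -> continuous g.
Proof.
move=> H x; apply: differentiable_continuous.
by apply/derivable1_diffP; exact: (H x).(ex_derive).
Qed.

Lemma mvt_glob (g dg : R -> R) (a b : R) :
  (forall x : R, is_derive x 1 g (dg x)) -> a < b ->
  exists2 c, a < c < b & g b - g a = dg c * (b - a).
Proof.
move=> H ab.
have [c] := MVT ab (fun x _ => H x) (continuous_subspaceT (cont_of_derive _ _ H)).
by rewrite in_itv /= => hc E; exists c.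
Qed.

Variables (f : nat -> R -> R) (K : nat) (e : R).
Hypotheses (e0 : 0 < e)
 (Hd : forall j, (j < K)%N -> forall x : R, is_derive x 1 (f j) (f j.+1 x))
 (HcK : continuous (f K))
 (H0 : forall j, (j < K)%N -> f j 0 = 0)
 (HnzK : forall t, 0 < t <= e -> f K t != 0)
 (Hpos0 : forall t, 0 < t <= e -> 0 < f 0 t).

Lemma cont_f j : (j <= K)%N -> continuous (f j).
Proof.
rewrite leq_eqVlt => /orP[/eqP -> //|jK].
exact: cont_of_derive _ _ (Hd _ jK).
Qed.

Lemma step1 j : (j <= K)%N -> forall t, 0 < t <= e -> exists2 c, 0 < c <= t & 0 < f j c.
Proof.
elim: j => [|j IH] jK t /andP[t0 te].
  by exists t; rewrite ?t0 ?lexx //; apply: Hpos0; rewrite t0.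
have hte : 0 < t <= e by rewrite t0 te.
have [c /andP[c0 ct] fc] := IH (ltnW jK) t hte.
have [c' /andP[c'0 c'c] E] := mvt_glob _ _ _ _ (Hd _ jK) c0.
exists c'; first by rewrite c'0 (ltW (lt_le_trans c'c ct)).
move: E; rewrite (H0 _ jK) subr0 subr0 => E.
by rewrite -(pmulr_lgt0 _ c0) -E.
Qed.

Lemma posK t : 0 < t <= e -> 0 < f K t.
Proof.
move=> hte; have [c /andP[c0 ct] fc] := step1 K (leqnn K) t hte.
rewrite lt0r (HnzK _ hte) /= leNgt; apply/negP => ft0.
have := IVT (v := 0) ct (continuous_subspaceT (cont_f K (leqnn K))).
case.
  by rewrite ge_min le_max (ltW fc) (ltW ft0) orbT.
move=> z; rewrite in_itv /= => /andP[cz zt] fz.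
have hz : 0 < z <= e.
  by apply/andP; split; [apply: lt_le_trans cz | apply: le_trans zt _; case/andP: hte].
by move: (HnzK z hz); rewrite fz eqxx.
Qed.

Lemma posj j : (j <= K)%N -> forall t, 0 < t <= e -> 0 < f j t.
Proof.
move=> jK; rewrite -(subKn jK).
suff : forall d, (d <= K)%N -> forall t, 0 < t <= e -> 0 < f (K - d)%N t.
  by apply; exact: leq_subr.
elim => [|d IH] dK t hte.
  by rewrite subn0; exact: posK.
have dK' : (d <= K)%N by apply: ltnW.
have jK' : (K - d.+1 < K)%N by rewrite ltn_subrL; apply/andP; split => //; apply: leq_ltn_trans dK.
case/andP: (hte) => t0 te.
have [c /andP[c0 ct] E] := mvt_glob _ _ _ _ (Hd _ jK') t0.
move: E; rewrite (H0 _ jK') !subr0 => ->.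
rewrite pmulr_lgt0 //.
have -> : (K - d.+1).+1 = (K - d)%N by rewrite subnS prednK // subn_gt0.
by apply: IH => //; rewrite c0 (ltW (lt_le_trans ct te)).
Qed.

Lemma ineq i : (i + 3 <= K)%N -> forall t, 0 <= t <= e ->
  f i.+1 t ^+ 2 <= 2 * f i t * f i.+2 t.
Proof.
move=> iK t /andP[t0 te].
have d0 := Hd _ (ltac:(lia) : (i < K)%N).
have d1 := Hd _ (ltac:(lia) : (i.+1 < K)%N).
have d2 := Hd _ (ltac:(lia) : (i.+2 < K)%N).
pose G := f i.+1 * f i.+1 - 2 \*: (f i * f i.+2).
have HG : forall x : R, is_derive x 1 G (-2 * (f i x * f i.+3 x)).
  move=> x; have h := (is_deriveB (is_deriveM (d1 x) (d1 x)) (is_deriveZ 2 (is_deriveM (d0 x) (d2 x)))).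
  apply: (is_derive_eq h).
  by rewrite /GRing.scale /=; ring.
have fi0 : f i 0 = 0 by apply: H0; lia.
have fi10 : f i.+1 0 = 0 by apply: H0; lia.
have fi20 : f i.+2 0 = 0 by apply: H0; lia.
have GE : forall x, G x = f i.+1 x * f i.+1 x - 2 * (f i x * f i.+2 x) by [].
have G0 : G 0 = 0 by rewrite GE fi0 fi10 fi20; ring.
have Gt : G t <= 0.
  move: t0; rewrite le_eqVlt => /orP[/eqP <-|t0]; first by rewrite G0.
  have [c /andP[c0 ct] E] := mvt_glob _ _ _ _ HG t0.
  move: E; rewrite G0 !subr0 => ->.
  have hc : 0 < c <= e by rewrite c0 (ltW (lt_le_trans ct te)).
  have p0 := posj i (ltac:(lia)) c hc.
  have p3 := posj i.+3 (ltac:(lia)) c hc.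
  rewrite pmulr_lle0 // mulNr oppr_le0; apply: mulr_ge0 => //.
  by apply: mulr_ge0; apply: ltW.
move: Gt; rewrite GE expr2; lra.
Qed.

Lemma core r a : (r + a + 2 <= K)%N -> exists2 C, 0 <= C &
  forall t, 0 <= t <= e -> `|f r t * f a t| <= C * f 0 t * `|f (r + a)%N t|.
Proof.
move=> hK; exists (2 ^+ (r * a)); first exact: exprn_ge0.
move=> t /andP[t0 te]; move: t0; rewrite le_eqVlt => /orP[/eqP <-|t0].
  by rewrite (H0 r) ?(H0 0) ?mul0r ?mulr0 ?normr0 //; lia.
have hte : 0 < t <= e by rewrite t0 te.
have xpos : forall j, (j <= K)%N -> 0 < (fun j => f j t) j.
  by move=> j jK; apply: posj.
have xlc : forall i, (i + 3 <= K)%N ->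
    (fun j => f j t) i.+1 ^+ 2 <= 2 * (fun j => f j t) i * (fun j => f j t) i.+2.
  by move=> i iK; apply: ineq => //; rewrite (ltW t0) te.
have := alg_main _ (fun j => f j t) K xpos xlc r a hK => /=.
rewrite ger0_norm; last by apply: mulr_ge0; apply: ltW; apply: posj => //; lia.
by rewrite (ger0_norm (ltW (posj _ _ _ hte))) //; lia.
Qed.
End Core.

Section Aux2.
Variable R : realType.

Lemma zero_left (g : R -> R) (x0 : R) : {for x0, continuous g} ->
  (forall y, y < x0 -> g y = 0) -> g x0 = 0.
Proof.
move=> cg H.
have h1 : g y @[y --> x0^'-] --> g x0 := cvg_at_left_filter cg.
have h2 : g y @[y --> x0^'-] --> 0.
  apply: cvg_near_cst; near=> y; apply: H; near: y; exact: nbhs_left_lt.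
exact: (norm_cvg_unique h1 h2).
Unshelve. all: by end_near. Qed.

Lemma zero_right (g : R -> R) (x0 : R) : {for x0, continuous g} ->
  (forall y, x0 < y -> g y = 0) -> g x0 = 0.
Proof.
move=> cg H.
have h1 : g y @[y --> x0^'+] --> g x0 := cvg_at_right_filter cg.
have h2 : g y @[y --> x0^'+] --> 0.
  apply: cvg_near_cst; near=> y; apply: H; near: y; exact: nbhs_right_gt.
exact: (norm_cvg_unique h1 h2).
Unshelve. all: by end_near. Qed.

Lemma is_derive_refl (g : R -> R) (dg c x : R) :
  is_derive (c - x) 1 g dg -> is_derive x 1 (fun s => g (c - s)) (- dg).
Proof.
move=> hg.
have hh : is_derive x 1 (fun s : R => c - s) (0 - 1).
  exact: (is_deriveB (is_derive_cst c x 1) (is_derive_id x 1)).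
have dh : derivable (fun s : R => c - s) x 1 := hh.(ex_derive).
have dgg : derivable g (c - x) 1 := hg.(ex_derive).
have dcomp : derivable (g \o (fun s : R => c - s)) x 1.
  apply/derivable1_diffP; apply: differentiable_comp; exact/derivable1_diffP.
apply: DeriveDef; first exact: dcomp.
rewrite -derive1E (derive1_comp dh dgg) !derive1E (@derive_val _ _ _ _ _ _ _ hg).
by rewrite (@derive_val _ _ _ _ _ _ _ hh) sub0r mulrN1.
Qed.

Lemma isolated (S : set R) (x0 : R) : finite_set S ->
  exists2 d, 0 < d & forall t, S t -> t != x0 -> d <= `|t - x0|.
Proof.
move=> /finite_fsetP[X ->].
suff : forall s : seq R, exists2 d, 0 < d &
    forall t, t \in s -> t != x0 -> d <= `|t - x0|.
  move=> /(_ (finmap.enum_fset X))[d d0 H]; exists d => // t Xt tx; apply: H => //.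
elim => [|y s [d d0 IH]]; first by exists 1.
have [->|yx] := eqVneq y x0.
  exists d => // t; rewrite inE => /orP[/eqP -> /eqP //|]; exact: IH.
exists (Num.min d `|y - x0|).
  by rewrite lt_min d0 normr_gt0 subr_eq0 yx.
move=> t; rewrite inE => /orP[/eqP -> _|ts tx].
  by rewrite ge_min lexx orbT.
by rewrite ge_min IH.
Qed.

Lemma bounded01 (g : R -> R) : continuous g ->
  exists2 M, 0 <= M & forall t, 0 <= t <= 1 -> `|g t| <= M.
Proof.
move=> cg.
have cn : continuous (fun t => `|g t|).
  by move=> x; apply: (continuous_comp (cg x)); exact: norm_continuous.
have [c _ Hc] := EVT_max ler01 (continuous_subspaceT cn).
exists `|g c| => // t ht; apply: Hc; by rewrite in_itv /=.
Qed.

Lemma normsign (j : nat) (y : R) : `|(-1) ^+ j * y| = `|y|.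
Proof. by rewrite normrM normrX normrN1 expr1n mul1r. Qed.
End Aux2.

Theorem corollary4p6 (R : realType) (p : \bar R) (m k : nat) (phi : R -> R) :
  (1%:E <= p)%E ->
  C0k k phi ->
  supp phi `<=` `[0, 1] ->
  (forall t : R, 0 < t < 1 -> 0 < phi t) ->
  (m.+1 < k)%N ->
  finite_set [set t : R | t \in `[0, 1] /\ derive1n k phi t = 0] ->
  forall r a : nat, (r + a <= m)%N ->
    Linfty01 (fun t => `|derive1n r phi t * derive1n a phi t| / (`|phi t| `^ inv_exp p)).
Proof.
move=> p1 [Hder [Huc Hcpt]] Hsupp Hpos mk Hfin r al ram.
pose D j := derive1n j phi.
have Hd : forall j, (j < k)%N -> forall x : R, is_derive x 1 (D j) (D j.+1 x).
  by move=> j jk x; rewrite /D derive1nS derive1E; exact: derivableP (Hder j jk x).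
have Hc : forall j, (j <= k)%N -> continuous (D j).
  by move=> j jk; exact: uc_continuous (Huc j jk).
have Hout : forall j, (j <= k)%N -> forall x, x < 0 \/ 1 < x -> D j x = 0.
  elim => [|j IH] jk x hx.
    rewrite /D derive1n0; apply/eqP; apply: contraT => hne.
    have : supp phi x by apply: subset_closure; exact: hne.
    move=> /Hsupp; rewrite /= in_itv /= => /andP[h0 h1].
    case: hx => hx.
      by move: (lt_le_trans hx h0); rewrite ltxx.
    by move: (le_lt_trans h1 hx); rewrite ltxx.
  rewrite /D derive1nS derive1E.
  have -> : 'D_1 (derive1n j phi) x = 'D_1 (cst (0:R)) x.
    apply: near_eq_derive; case: hx => hx.
      near=> y.
      have hy : y < 0 by near: y; exact: lt_nbhsl hx.
      exact: IH (ltnW jk) y (or_introl hy).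
    near=> y.
    have hy : 1 < y by near: y; exact: lt_nbhsr hx.
    exact: IH (ltnW jk) y (or_intror hy).
  by rewrite (@derive_val _ _ _ _ _ _ _ (is_derive_cst (0:R) x 1)).
have H0 : forall j, (j <= k)%N -> D j 0 = 0.
  by move=> j jk; apply: zero_left (Hc j jk 0) _ => y y0; apply: Hout => //; left.
have H1 : forall j, (j <= k)%N -> D j 1 = 0.
  by move=> j jk; apply: zero_right (Hc j jk 1) _ => y y0; apply: Hout => //; right.
have hK : (r + al + 2 <= k)%N.
  by apply: leq_trans mk; rewrite addn2 !ltnS.
have [d0 d0p Hd0] := isolated _ _ 0 Hfin.
have [d1 d1p Hd1] := isolated _ _ 1 Hfin.
pose e0 := Num.min (d0 / 2) (1 / 4).
pose e1 := Num.min (d1 / 2) (1 / 4).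
have e0p : 0 < e0 by rewrite lt_min; apply/andP; split; lra.
have e1p : 0 < e1 by rewrite lt_min; apply/andP; split; lra.
have e0q : e0 <= 1 / 4 by rewrite ge_min lexx orbT.
have e1q : e1 <= 1 / 4 by rewrite ge_min lexx orbT.
have e0d : e0 < d0 by rewrite gt_min; apply/orP; left; lra.
have e1d : e1 < d1 by rewrite gt_min; apply/orP; left; lra.
have HnzL : forall t, 0 < t <= e0 -> D k t != 0.
  move=> t /andP[t0 te]; apply/eqP => Dz.
  have Zt : [set t : R | t \in `[0, 1] /\ derive1n k phi t = 0] t.
    split => //; rewrite in_itv /= (ltW t0) /=; lra.
  have := Hd0 t Zt (lt0r_neq0 t0); rewrite subr0 gtr0_norm //; lra.
have HposL : forall t, 0 < t <= e0 -> 0 < D 0 t.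
  move=> t /andP[t0 te]; rewrite /D derive1n0; apply: Hpos; rewrite t0 /=; lra.
have [C0 C0p HC0] := core _ D k e0 e0p Hd (Hc k (leqnn k)) (fun j jk => H0 j (ltnW jk)) HnzL HposL r al hK.
pose h := fun j : nat => ((-1) ^+ j) \*: (fun s : R => D j (1 - s)).
have hE : forall j s, h j s = (-1) ^+ j * D j (1 - s) by [].
have Hdh : forall j, (j < k)%N -> forall x : R, is_derive x 1 (h j) (h j.+1 x).
  move=> j jk x.
  have := is_deriveZ ((-1) ^+ j) (is_derive_refl _ _ _ _ _ (Hd j jk (1 - x))).
  move=> hh; apply: (is_derive_eq hh).
  by rewrite hE /GRing.scale /= exprS; ring.
have Hch : continuous (h k).
  have c1 : continuous (fun s : R => 1 - s).
    have hh : forall y : R, is_derive y 1 (fun s : R => 1 - s) ((fun _ => 0 - 1) y).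
      move=> y; exact: (is_deriveB (is_derive_cst (1:R) y 1) (is_derive_id y 1)).
    exact: (cont_of_derive _ _ _ hh).
  move=> x; apply: continuousZl_tmp.
  exact: (continuous_comp (c1 x) (Hc k (leqnn k) (1 - x))).
have H0h : forall j, (j < k)%N -> h j 0 = 0.
  by move=> j jk; rewrite hE subr0 H1 ?mulr0 // ltnW.
have HnzR : forall t, 0 < t <= e1 -> h k t != 0.
  move=> t /andP[t0 te]; rewrite hE mulf_eq0 signr_eq0 /=; apply/eqP => Dz.
  have Zt : [set t : R | t \in `[0, 1] /\ derive1n k phi t = 0] (1 - t).
    split => //; rewrite in_itv /=; apply/andP; split; lra.
  have t1 : 1 - t != 1 by rewrite subr_eq addrC -subr_eq subrr eq_sym lt0r_neq0.
  have nt : `|1 - t - 1| = t by rewrite addrAC subrr add0r normrN gtr0_norm.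
  have := Hd1 (1 - t) Zt t1; rewrite nt; lra.
have HposR : forall t, 0 < t <= e1 -> 0 < h 0 t.
  move=> t /andP[t0 te]; rewrite hE expr0 mul1r /D derive1n0; apply: Hpos.
  apply/andP; split; lra.
have [C1 C1p HC1] := core _ h k e1 e1p Hdh Hch H0h HnzR HposR r al hK.
have rk : (r <= k)%N by apply: leq_trans hK; rewrite -addnA leq_addr.
have ak : (al <= k)%N by apply: leq_trans hK; rewrite addnAC leq_addl.
have rak : (r + al <= k)%N by apply: leq_trans hK; rewrite leq_addr.
have [Mr Mrp HMr] := bounded01 _ _ (Hc r rk).
have [Ma Map HMa] := bounded01 _ _ (Hc al ak).
have [Mk Mkp HMk] := bounded01 _ _ (Hc (r + al)%N rak).
have e01 : e0 <= 1 - e1 by lra.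
have [c cI Hmin] := EVT_min e01 (continuous_subspaceT (Hc 0%N (leq0n k))).
move: cI; rewrite in_itv /= => /andP[c0 c1].
have dp : 0 < D 0%N c.
  by rewrite /D derive1n0; apply: Hpos; apply/andP; split; lra.
pose dl := D 0%N c.
pose KK := C0 * Mk + C1 * Mk + Mr * Ma / dl.
have KKp : 0 <= KK.
  have g1 : 0 <= Mr * Ma / dl by apply: divr_ge0; [apply: mulr_ge0 | apply: ltW].
  have g2 : 0 <= C0 * Mk := mulr_ge0 C0p Mkp.
  have g3 : 0 <= C1 * Mk := mulr_ge0 C1p Mkp.
  rewrite /KK; lra.
have KKb : forall t, 0 <= t <= 1 -> `|D r t * D al t| <= KK * `|D 0%N t|.
  move=> t /andP[t0 t1].
  have ht : 0 <= t <= 1 by rewrite t0 t1.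
  have n0 : 0 <= `|D 0%N t| := normr_ge0 _.
  have nn1 : 0 <= C0 * Mk * `|D 0%N t| by rewrite !mulr_ge0.
  have nn2 : 0 <= C1 * Mk * `|D 0%N t| by rewrite !mulr_ge0.
  have nn3 : 0 <= Mr * Ma / dl * `|D 0%N t| by rewrite !mulr_ge0 // invr_ge0 ltW.
  have hk := HMk t ht.
  have [te0|te0] := leP t e0.
    have := HC0 t (_ : 0 <= t <= e0); rewrite t0 te0 => /(_ erefl) h1.
    have s1 : C0 * D 0%N t * `|D (r + al)%N t| <= C0 * `|D 0%N t| * Mk.
      apply: (le_trans (y := C0 * `|D 0%N t| * `|D (r + al)%N t|)).
        by apply: ler_wpM2r => //; apply: ler_wpM2l => //; exact: ler_norm.
      by apply: ler_wpM2l => //; apply: mulr_ge0.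
    rewrite /KK; lra.
  have [te1|te1] := leP (1 - e1) t.
    have hs : 0 <= 1 - t <= e1 by apply/andP; split; lra.
    have h1 := HC1 (1 - t) hs.
    have ts : 1 - (1 - t) = t by ring.
    rewrite !hE ts expr0 mul1r !normrM !normrX normrN1 !expr1n !mul1r in h1.
    have s1 : C1 * D 0%N t * `|D (r + al)%N t| <= C1 * `|D 0%N t| * Mk.
      apply: (le_trans (y := C1 * `|D 0%N t| * `|D (r + al)%N t|)).
        by apply: ler_wpM2r => //; apply: ler_wpM2l => //; exact: ler_norm.
      by apply: ler_wpM2l => //; apply: mulr_ge0.
    rewrite /KK normrM; lra.
  have hmid : dl <= `|D 0%N t|.
    apply: (le_trans (Hmin t _)); first by rewrite in_itv /=; apply/andP; split; lra.
    exact: ler_norm.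
  have q1 : 1 <= `|D 0%N t| / dl by rewrite ler_pdivlMr // mul1r.
  have q2 := ler_peMr (mulr_ge0 Mrp Map) q1.
  have q3 : `|D r t * D al t| <= Mr * Ma.
    by rewrite normrM; apply: ler_pM => //; [exact: HMr | exact: HMa].
  rewrite /KK; lra.
have ep01 : 0 <= inv_exp p <= 1.
  move: p1; case: p => [pr| |] //=.
    rewrite lee_fin => hp; apply/andP; split.
      by rewrite invr_ge0; lra.
    by rewrite invf_le1; lra.
  by rewrite lexx ler01.
set ep := inv_exp p in ep01 *.
case/andP: ep01 => ep0 ep1.
have Mp : 0 <= Mr * Ma := mulr_ge0 Mrp Map.
apply: (Linfty01_bound _ _ (KK + Mr * Ma)).
  apply: measurable_funM.
    apply: (@measurableT_comp _ _ _ _ _ _ (@Num.Def.normr _ R) _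
      (fun x => derive1n r phi x * derive1n al phi x)); first exact: normr_measurable.
    apply: measurable_funM.
      by apply: (measurable_funS _ (subsetT _)) => //; apply: continuous_measurable_fun; exact: Hc.
    by apply: (measurable_funS _ (subsetT _)) => //; apply: continuous_measurable_fun; exact: Hc.
  apply: (@measurableT_comp _ _ _ _ _ _ (@GRing.inv R) _
      (fun x => `|phi x| `^ ep)); first exact: measurable_inv.
  apply: (@measurableT_comp _ _ _ _ _ _ (fun x : R => x `^ ep) _
      (fun x => `|phi x|)); first exact: measurable_powR.
  apply: (@measurableT_comp _ _ _ _ _ _ (@Num.Def.normr _ R) _ phi); first exact: normr_measurable.
  by apply: (measurable_funS _ (subsetT _)) => //; apply: continuous_measurable_fun; exact: (Hc 0%N).
move=> t ht.
have nb := KKb t ht.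
have numM : `|D r t * D al t| <= Mr * Ma.
  by rewrite normrM; apply: ler_pM => //; [exact: HMr | exact: HMa].
change (`|(`|D r t * D al t| / (`|D 0%N t| `^ ep))| <= KK + Mr * Ma).
rewrite ger0_norm; last by apply: divr_ge0 => //; apply: powR_ge0.
move: nb numM; set y := `|D 0%N t|; set num := `|D r t * D al t| => nb numM.
have y0 : 0 <= y := normr_ge0 _.
have num0 : 0 <= num := normr_ge0 _.
have [yz|yp] := eqVneq y 0.
  have -> : num = 0 by apply/eqP; rewrite eq_le num0 andbT; move: nb; rewrite yz mulr0.
  by rewrite mul0r; lra.
have yp' : 0 < y by rewrite lt0r yp y0.
have pp : 0 < y `^ ep := powR_gt0 _ yp'.
rewrite ler_pdivrMr //.
have [y1|y1] := leP y 1.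
  have hy : y <= y `^ ep by apply: ger1_powR => //; rewrite yp'.
  have h2 := ler_wpM2l KKp hy.
  have h3 : 0 <= Mr * Ma * y `^ ep := mulr_ge0 Mp (ltW pp).
  lra.
have hy : 1 <= y `^ ep.
  by rewrite -(powRr0 y); apply: ler_powR => //; apply: ltW.
have h2 := ler_peMr Mp hy.
have h3 : 0 <= KK * y `^ ep := mulr_ge0 KKp (ltW pp).
lra.
Unshelve. all: by end_near.
Qed.
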